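(* Let $p\in(1,\infty)$ and let $Y$ be a Banach space whose norm satisfies Rolewicz property $(\beta)$ with power type $p$. Then there exists $\gamma=\gamma(Y)>0$ such that for every non-contractive Lipschitz map $f\colon P^\omega_1\to Y$, $$\|f(r)-f(s)\|\le 3\left(\mathrm{Lip}(f)-\frac{\gamma}{\mathrm{Lip}(f)^{p-1}}\right).$$
   Context: For a Banach space $X$ with closed unit ball $B_X$ and a sequence $(y_n)_{n\ge1}$ in $X$, let $\mathrm{sep}[(y_n)]:=\inf\{\|y_m-y_n\|: m\neq n\}$. The $(\beta)$-modulus of the norm is $$\overline{\beta}_X(t):=1-\sup\Big\{\inf_{n\ge1}\tfrac{\|x+y_n\|}{2}\ :\ x\in B_X,\ (y_n)_{n\ge1}\subset B_X,\ \mathrm{sep}[(y_n)]\ge t\Big\},$$ and the norm satisfies property $(\beta)$ with power type $p$ if there is $c>0$ with $\overline{\beta}_X(t)\ge ct^p$ for all $t\in(0,2]$. The parasol graph $P^\omega_1$ has vertex set $\{r,b,s\}\cup\{t_i:i\ge1\}$ (all distinct) and edges $\{r,b\}$, $\{b,t_i\}$ and $\{t_i,s\}$ for every $i\ge1$; it carries the unweighted shortest-path metric $\rho$ (so $\rho(r,s)=3$). A map $f$ is non-contractive if $\|f(x)-f(y)\|\ge\rho(x,y)$ for all $x,y$; $\mathrm{Lip}(f)$ is its Lipschitz constant. *)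

(* Defs.v *)
From Stdlib Require Import Reals Lra.
Open Scope R_scope.

Record Banach := {
  car :> Type;
  vzero : car;
  vadd : car -> car -> car;
  vopp : car -> car;
  vscal : R -> car -> car;
  norm : car -> R;
  vadd_assoc : forall x y z, vadd x (vadd y z) = vadd (vadd x y) z;
  vadd_comm : forall x y, vadd x y = vadd y x;
  vadd_0 : forall x, vadd x vzero = x;
  vadd_opp : forall x, vadd x (vopp x) = vzero;
  vscal_assoc : forall a b x, vscal a (vscal b x) = vscal (a * b) x;
  vscal_1 : forall x, vscal 1 x = x;
  vscal_distr_v : forall a x y, vscal a (vadd x y) = vadd (vscal a x) (vscal a y);
  vscal_distr_s : forall a b x, vscal (a + b) x = vadd (vscal a x) (vscal b x);
  norm_eq0 : forall x, norm x = 0 -> x = vzero;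
  norm_triangle : forall x y, norm (vadd x y) <= norm x + norm y;
  norm_scal : forall a x, norm (vscal a x) = Rabs a * norm x;
  complete : forall u : nat -> car,
    (forall eps, 0 < eps -> exists N, forall m n, (N <= m)%nat -> (N <= n)%nat ->
        norm (vadd (u m) (vopp (u n))) < eps) ->
    exists l, forall eps, 0 < eps -> exists N, forall n, (N <= n)%nat ->
        norm (vadd (u n) (vopp l)) < eps
}.

Definition vsub (X : Banach) (x y : X) : X := vadd X x (vopp X y).

Definition in_ball (X : Banach) (x : X) : Prop := norm X x <= 1.

Definition is_glb (E : R -> Prop) (m : R) : Prop :=
  (forall r, E r -> m <= r) /\ (forall b, (forall r, E r -> b <= r) -> b <= m).

Definition sep_ge (X : Banach) (y : nat -> X) (t : R) : Prop :=
  forall m n, m <> n -> t <= norm X (vsub X (y m) (y n)).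

(** The set whose supremum appears in the (beta)-modulus at t:
    { inf_n ||x + y_n||/2 : x in B_X, (y_n) in B_X, sep[(y_n)] >= t }. *)
Definition beta_set (X : Banach) (t : R) (v : R) : Prop :=
  exists (x : X) (y : nat -> X),
    in_ball X x /\ (forall n, in_ball X (y n)) /\ sep_ge X y t /\
    is_glb (fun r => exists n, r = norm X (vadd X x (y n)) / 2) v.

(** Property (beta) with power type p: exists c > 0 with
    betabar_X(t) = 1 - sup(beta_set t) >= c t^p for all t in (0,2],
    i.e. sup (beta_set t) <= 1 - c t^p, i.e. 1 - c t^p is an upper bound. *)
Definition beta_power_type (X : Banach) (p : R) : Prop :=
  exists c, 0 < c /\
    forall t, 0 < t <= 2 -> forall v, beta_set X t v -> v <= 1 - c * Rpower t p.

(** The parasol graph P^omega_1: vertices r, b, s and t_i (i : nat, a countably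
    infinite family of distinct tips). Edges {r,b}, {b,t_i}, {t_i,s}. *)
Inductive parasol : Type := Pr | Pb | Ps | Pt (i : nat).

Definition rho (u v : parasol) : R :=
  match u, v with
  | Pr, Pr | Pb, Pb | Ps, Ps => 0
  | Pt i, Pt j => if Nat.eqb i j then 0 else 2
  | Pr, Pb | Pb, Pr => 1
  | Pb, Pt _ | Pt _, Pb => 1
  | Pt _, Ps | Ps, Pt _ => 1
  | Pr, Pt _ | Pt _, Pr => 2
  | Pb, Ps | Ps, Pb => 2
  | Pr, Ps | Ps, Pr => 3
  end.

Definition non_contractive (X : Banach) (f : parasol -> X) : Prop :=
  forall u v, rho u v <= norm X (vsub X (f u) (f v)).

Definition lip_ratios (X : Banach) (f : parasol -> X) (r : R) : Prop :=
  exists u v, u <> v /\ r = norm X (vsub X (f u) (f v)) / rho u v.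

Definition is_Lip (X : Banach) (f : parasol -> X) (L : R) : Prop :=
  is_lub (lip_ratios X f) L.

(* Main.v *)
Require Import Defs.
From Stdlib Require Import Reals Lra.
Open Scope R_scope.

Section Alg.
Variable X : Banach.

Lemma vscal0 (x : X) : vscal X 0 x = vzero X.
Proof.
  set (y := vscal X 0 x).
  assert (Hy : y = vadd X y y) by (unfold y; rewrite <- vscal_distr_s; f_equal; ring).
  transitivity (vadd X (vadd X y y) (vopp X y)).
  { rewrite <- vadd_assoc, vadd_opp, vadd_0. reflexivity. }
  rewrite <- Hy. apply vadd_opp.
Qed.

Lemma vopp_scal (x : X) : vopp X x = vscal X (-1) x.
Proof.
  symmetry.
  transitivity (vadd X (vadd X (vscal X (-1) x) (vscal X 1 x)) (vopp X x)).
  { rewrite vscal_1, <- vadd_assoc, vadd_opp, vadd_0. reflexivity. }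
  rewrite <- vscal_distr_s. replace (-1 + 1) with 0 by ring.
  rewrite vscal0, vadd_comm, vadd_0. reflexivity.
Qed.

Lemma vadd0l (x : X) : vadd X (vzero X) x = x.
Proof. rewrite vadd_comm; apply vadd_0. Qed.

Lemma vopp_add (x y : X) : vopp X (vadd X x y) = vadd X (vopp X x) (vopp X y).
Proof. rewrite !vopp_scal. apply vscal_distr_v. Qed.

Lemma vopp_opp (x : X) : vopp X (vopp X x) = x.
Proof. rewrite !vopp_scal, vscal_assoc. replace (-1 * -1) with 1 by ring. apply vscal_1. Qed.

Lemma vsub_chain (a b c : X) : vsub X a c = vadd X (vsub X a b) (vsub X b c).
Proof.
  unfold vsub. rewrite <- vadd_assoc. f_equal.
  rewrite vadd_assoc, (vadd_comm X (vopp X b) b), vadd_opp, vadd0l. reflexivity.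
Qed.

Lemma vsub_cancel (a b c : X) : vsub X (vsub X a c) (vsub X b c) = vsub X a b.
Proof.
  unfold vsub. rewrite vopp_add, vopp_opp.
  rewrite <- vadd_assoc. f_equal.
  rewrite (vadd_comm X (vopp X b) c), vadd_assoc, (vadd_comm X (vopp X c) c),
    vadd_opp, vadd0l. reflexivity.
Qed.

Lemma vscal_sub (k : R) (a b : X) : vscal X k (vsub X a b) = vsub X (vscal X k a) (vscal X k b).
Proof.
  unfold vsub. rewrite vscal_distr_v. f_equal.
  rewrite !vopp_scal, !vscal_assoc. f_equal; ring.
Qed.

Lemma norm0 : norm X (vzero X) = 0.
Proof. rewrite <- (vscal0 (vzero X)), norm_scal, Rabs_R0. ring. Qed.

End Alg.

Lemma rho_pos u v : u <> v -> 0 < rho u v.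
Proof.
  destruct u, v; simpl; intros; try lra; try (exfalso; now apply H).
  destruct (Nat.eqb i i0) eqn:E; [|lra].
  apply Nat.eqb_eq in E; subst; exfalso; now apply H.
Qed.

Lemma lipb (Y : Banach) (f : parasol -> Y) L : is_Lip Y f L ->
  forall u v, u <> v -> norm Y (vsub Y (f u) (f v)) <= L * rho u v.
Proof.
  intros [H _] u v Huv. pose proof (rho_pos u v Huv).
  assert (Hr := H _ (ex_intro _ u (ex_intro _ v (conj Huv eq_refl)))).
  apply Rmult_le_compat_r with (r := rho u v) in Hr; [|lra].
  unfold Rdiv in Hr. rewrite Rmult_assoc, Rinv_l in Hr by lra. lra.
Qed.

Theorem lemma3 (p : R) (hp : 1 < p) (Y : Banach) (hY : beta_power_type Y p) :
  exists gamma, 0 < gamma /\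
    forall (f : parasol -> Y) (L : R),
      non_contractive Y f -> is_Lip Y f L ->
      norm Y (vsub Y (f Pr) (f Ps)) <= 3 * (L - gamma / Rpower L (p - 1)).
Proof.
  destruct hY as [c [Hc Hb]].
  exists (2 * c * Rpower 2 p / 3). split.
  { unfold Rpower. pose proof (exp_pos (p * ln 2)). apply Rmult_lt_0_compat; [|lra].
    apply Rmult_lt_0_compat; lra. }
  intros f L Hnc HL.
  pose proof (lipb Y f L HL) as Hl.
  assert (HL1 : 1 <= L).
  { pose proof (Hnc Pr Pb). pose proof (Hl Pr Pb ltac:(discriminate)). simpl in *. lra. }
  set (u := f Pb). set (w := f Ps).
  set (d := norm Y (vsub Y u w)).
  assert (Hd : 2 <= d) by (apply (Hnc Pb Ps)).
  set (e := vscal Y (/d) (vsub Y u w)).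
  set (b := fun n => vscal Y (/L) (vsub Y (f (Pt n)) w)).
  set (g := fun n => norm Y (vadd Y e (b n)) / 2).
  assert (Hkey : forall n, d / (2 * L) <= g n).
  { intro n. unfold g.
    set (a := vscal Y (/L) (vsub Y u (f (Pt n)))).
    assert (Ha : norm Y a <= 1).
    { unfold a. rewrite norm_scal, Rabs_right by (apply Rle_ge, Rlt_le, Rinv_0_lt_compat; lra).
      pose proof (Hl Pb (Pt n) ltac:(discriminate)). simpl in H. fold u in H.
      apply Rmult_le_reg_l with L; [lra|]. rewrite <- Rmult_assoc, Rinv_r by lra. lra. }
    assert (Hid : vscal Y (/d + /L) (vsub Y u w) = vadd Y (vadd Y e (b n)) a).
    { rewrite <- vadd_assoc. unfold e, b, a. rewrite <- vscal_distr_v.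
      rewrite (vadd_comm Y (vsub Y (f (Pt n)) w)), <- vsub_chain, vscal_distr_s. reflexivity. }
    pose proof (norm_triangle Y (vadd Y e (b n)) a). rewrite <- Hid in H.
    rewrite norm_scal in H. fold d in H.
    rewrite Rabs_right in H.
    2: { apply Rle_ge. assert (0 < /d) by (apply Rinv_0_lt_compat; lra).
         assert (0 < /L) by (apply Rinv_0_lt_compat; lra). lra. }
    assert (E1 : (/d + /L) * d = 1 + d / L) by (field; lra).
    rewrite E1 in H.
    assert (d / (2 * L) = (d / L) / 2) by (field; lra). lra. }
  set (E := fun r => exists n, - r = g n).
  destruct (completeness E) as [m [Hm1 Hm2]].
  { exists (- (d / (2 * L))). intros r [n Hn]. pose proof (Hkey n). lra. }
  { exists (- g 0%nat). exists 0%nat. ring. }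
  assert (Hglb : is_glb (fun r => exists n, r = norm Y (vadd Y e (b n)) / 2) (- m)).
  { split.
    - intros r [n Hn]. assert (E (- r)) by (exists n; rewrite Hn; unfold g; ring).
      pose proof (Hm1 _ H). lra.
    - intros bb Hbb. assert (is_upper_bound E (- bb)).
      { intros r [n Hn]. pose proof (Hbb (- r) (ex_intro _ n Hn)). lra. }
      pose proof (Hm2 _ H). lra. }
  assert (Hv : d / (2 * L) <= - m).
  { apply (proj2 Hglb). intros r [n Hn]. rewrite Hn. apply Hkey. }
  assert (Ht : 0 < 2 / L <= 2).
  { split. apply Rdiv_lt_0_compat; lra.
    apply Rmult_le_reg_l with L; [lra|]. field_simplify; lra. }
  assert (Hbs : beta_set Y (2 / L) (- m)).
  { exists e, b. split; [|split; [|split]].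
    - unfold in_ball, e. rewrite norm_scal, Rabs_right by (apply Rle_ge, Rlt_le, Rinv_0_lt_compat; lra).
      fold d. rewrite Rinv_l by lra. lra.
    - intro n. unfold in_ball, b. rewrite norm_scal,
        Rabs_right by (apply Rle_ge, Rlt_le, Rinv_0_lt_compat; lra).
      pose proof (Hl (Pt n) Ps ltac:(discriminate)). simpl in H. fold w in H.
      apply Rmult_le_reg_l with L; [lra|]. rewrite <- Rmult_assoc, Rinv_r by lra. lra.
    - intros i j Hij. unfold b. rewrite <- vscal_sub, vsub_cancel, norm_scal,
        Rabs_right by (apply Rle_ge, Rlt_le, Rinv_0_lt_compat; lra).
      pose proof (Hnc (Pt i) (Pt j)). simpl in H.
      destruct (Nat.eqb i j) eqn:Eq. { apply Nat.eqb_eq in Eq. contradiction. }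
      unfold Rdiv. rewrite Rmult_comm. apply Rmult_le_compat_l; [|lra].
      apply Rlt_le, Rinv_0_lt_compat; lra.
    - exact Hglb. }
  pose proof (Hb _ Ht _ Hbs) as Hbeta.
  assert (HRp : Rpower (2 / L) p = Rpower 2 p / (Rpower L (p - 1) * L)).
  { assert (Rpower L (p - 1) * L = Rpower L p).
    { rewrite <- (Rpower_1 L) at 2 by lra. rewrite <- Rpower_plus. f_equal; ring. }
    rewrite H. unfold Rdiv. rewrite <- Rpower_mult_distr by (try apply Rinv_0_lt_compat; lra).
    f_equal. unfold Rpower. rewrite ln_Rinv by lra.
    replace (p * - ln L) with (- (p * ln L)) by ring. apply exp_Ropp. }
  assert (HRL : 0 < Rpower L (p - 1)) by (unfold Rpower; apply exp_pos).
  rewrite HRp in Hbeta.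
  pose proof (Hl Pr Pb ltac:(discriminate)) as Hrb. simpl in Hrb.
  pose proof (norm_triangle Y (vsub Y (f Pr) u) (vsub Y u w)) as Htri.
  rewrite <- vsub_chain in Htri. fold d in Htri.
  assert (Hd2 : d <= 2 * L - 2 * c * Rpower 2 p / Rpower L (p - 1)).
  { assert (d <= 2 * L * (1 - c * (Rpower 2 p / (Rpower L (p - 1) * L)))).
    { assert (d = 2 * L * (d / (2 * L))) by (field; lra). rewrite H.
      apply Rmult_le_compat_l; lra. }
    replace (2 * L * (1 - c * (Rpower 2 p / (Rpower L (p - 1) * L))))
      with (2 * L - 2 * c * Rpower 2 p / Rpower L (p - 1)) in H by (field; lra).
    exact H. }
  replace (3 * (L - 2 * c * Rpower 2 p / 3 / Rpower L (p - 1)))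
    with (L + (2 * L - 2 * c * Rpower 2 p / Rpower L (p - 1))) by (field; lra).
  fold u in Hrb. lra.
Qed.
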